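(* Let $\theta\in\Theta\subseteq\mathbb{R}^n$ be a parameter vector and $\mathbf{y}$ observed data, with likelihood $p(\mathbf{y}|\theta)$, prior density $p(\theta)$, and posterior density $p(\theta|\mathbf{y})=p(\mathbf{y}|\theta)p(\theta)/p(\mathbf{y})$, where $p(\mathbf{y})=\int_\Theta p(\mathbf{y}|\theta)p(\theta)\,d\theta$. Let $\mathcal{Q}$ be a family of densities on $\Theta$ and let $q^*$ be the variational Bayes approximate posterior density $$q^*=\operatorname{argmin}_{q\in\mathcal{Q}} \int_\Theta q(\theta)\ln\frac{q(\theta)}{p(\theta|\mathbf{y})}\,d\theta .$$ Let $\Omega_p=\{\theta: p(\theta|\mathbf{y})>0\}$ be the support of the posterior density. Suppose that (i) for the given data $\mathbf{y}$ the likelihood $p(\mathbf{y}|\theta)$ is bounded from above over the parameter space; (ii) the prior density $p(\theta)$ is proper; (iii) $q^*$ is bounded from above; (iv) $q^*$ is continuous and differentiable; and suppose further that the posterior density $p(\theta|\mathbf{y})$ is continuous and differentiable on $\Omega_p$. Then the posterior density dominates $q^*$, that is, $p(\mathbf{y}|\theta)p(\theta)=0 \Rightarrow q^*(\theta)=0$.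
   Context: The VB approximate posterior $q^*$ is the minimizer over the family $\mathcal{Q}$ of the Kullback–Leibler divergence $KL[q\,\|\,p(\cdot|\mathbf{y})]=\int q\ln(q/p(\cdot|\mathbf{y}))$.
   Formalization: Some q ∈ $\mathcal{Q}$ has finite KL divergence from the posterior, and the conclusion $p(\mathbf{y}|\theta)p(\theta)=0 \Rightarrow q^*(\theta)=0$ holds only for Lebesgue-almost every θ ∈ Θ rather than for every θ. The statement above fails without it. *)

(* Defs.v *)
From HB Require Import structures.
From mathcomp Require Import all_boot all_order all_algebra.
From mathcomp Require Import all_classical all_reals all_analysis.
Set Implicit Arguments. Unset Strict Implicit. Unset Printing Implicit Defensive.
Import Order.TTheory GRing.Theory Num.Theory.
Import numFieldNormedType.Exports.
Local Open Scope classical_set_scope.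
Local Open Scope ring_scope.

Definition Rn (R : realType) (n : nat) :=
  g_sigma_algebraType (@open 'rV[R]_n).

Definition is_lebesgue_Rn (R : realType) (n : nat)
    (mu : {measure set (Rn R n) -> \bar R}) : Prop :=
  forall a b : 'rV[R]_n, (forall i, a ord0 i <= b ord0 i) ->
    mu [set x : 'rV[R]_n | forall i, a ord0 i <= x ord0 i <= b ord0 i]
    = (\prod_(i < n) (b ord0 i - a ord0 i))%:E.

Definition is_density (R : realType) (n : nat)
    (mu : {measure set (Rn R n) -> \bar R}) (Theta : set (Rn R n))
    (f : 'rV[R]_n -> R) : Prop :=
  measurable_fun Theta (f : Rn R n -> R) /\
  (forall x, Theta x -> 0 <= f x) /\
  (\int[mu]_(x in Theta) (f x)%:E = 1)%E.

Definition evidence (R : realType) (n : nat)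
    (mu : {measure set (Rn R n) -> \bar R}) (Theta : set (Rn R n))
    (lik prior : 'rV[R]_n -> R) : \bar R :=
  (\int[mu]_(x in Theta) (lik x * prior x)%:E)%E.

Definition posterior (R : realType) (n : nat)
    (mu : {measure set (Rn R n) -> \bar R}) (Theta : set (Rn R n))
    (lik prior : 'rV[R]_n -> R) : 'rV[R]_n -> R :=
  fun x => lik x * prior x / fine (evidence mu Theta lik prior).

(* the integrand q ln (q/p), with conventions 0 ln(0/p) = 0 and
   q ln(q/0) = +oo for q > 0 *)
Definition kl_integrand (R : realType) (a b : R) : \bar R :=
  if a == 0 then 0%E else if b <= 0 then +oo%E else (a * ln (a / b))%:E.

Definition KL (R : realType) (n : nat)
    (mu : {measure set (Rn R n) -> \bar R}) (Theta : set (Rn R n))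
    (q p : 'rV[R]_n -> R) : \bar R :=
  (\int[mu]_(x in Theta) kl_integrand (q x) (p x))%E.

Definition is_VB_posterior (R : realType) (n : nat)
    (mu : {measure set (Rn R n) -> \bar R}) (Theta : set (Rn R n))
    (Q : set ('rV[R]_n -> R)) (post qs : 'rV[R]_n -> R) : Prop :=
  Q qs /\ forall q, Q q -> (KL mu Theta qs post <= KL mu Theta q post)%E.

(* Main.v *)
Require Import Defs.
From HB Require Import structures.
From mathcomp Require Import all_boot all_order all_algebra.
From mathcomp Require Import all_classical all_reals all_analysis.
From mathcomp Require Import lra.
Import Order.TTheory GRing.Theory Num.Theory.
Import numFieldNormedType.Exports.
Local Open Scope classical_set_scope.
Local Open Scope ring_scope.


Section Helpers.
Local Open Scope ereal_scope.

Lemma mono_int d (T : measurableType d) (R : realType)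
  (mu : {measure set T -> \bar R}) (D : set T) (f g : T -> \bar R) :
  (forall x, D x -> 0 <= f x) -> (forall x, D x -> f x <= g x) ->
  \int[mu]_(x in D) f x <= \int[mu]_(x in D) g x.
Proof.
move=> f0 fg.
have g0 : forall x, D x -> 0 <= g x by move=> x Dx; exact: le_trans (f0 _ Dx) (fg _ Dx).
rewrite !ge0_integralE//.
apply/ge_ereal_sup => _ [h hf <-]; apply: ereal_sup_ubound; exists h => //= x.
apply: le_trans (hf x) _; rewrite /patch; case: ifP => // /set_mem Dx.
exact: fg.
Qed.

Lemma kl_bound (R : realType) (a b : R) : (0 < a)%R -> (0 < b)%R ->
  (- (a * ln (a / b)) <= b)%R.
Proof.
move=> a0 b0.
have e : (ln (a / b) = - ln (b / a))%R.
  by rewrite -lnV ?posrE ?divr_gt0// invf_div.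
rewrite e mulrN opprK.
have h : (ln (b / a) <= b / a - 1)%R.
  have := @le_ln1Dx R (b / a - 1); rewrite (addrC 1%R) subrK; apply.
  by rewrite ltrBrDl subrr divr_gt0.
have : (a * ln (b / a) <= a * (b / a - 1))%R by rewrite ler_pM2l.
rewrite mulrBr mulr1 mulrCA divff ?gt_eqF// mulr1 => H.
apply: le_trans H _; rewrite lerBlDr lerDl; exact: ltW.
Qed.

End Helpers.
Theorem corollary1 (R : realType) (n : nat)
    (mu : {measure set (Rn R n) -> \bar R})
    (Theta : set (Rn R n))
    (lik prior : 'rV[R]_n -> R)
    (Q : set ('rV[R]_n -> R))
    (qs : 'rV[R]_n -> R) :
  is_lebesgue_Rn mu ->
  measurable Theta ->
  (* likelihood p(y|.) for the fixed data y *)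
  measurable_fun Theta (lik : Rn R n -> R) ->
  (forall x, Theta x -> 0 <= lik x) ->
  (* posterior well defined: p(y) > 0 *)
  (0 < evidence mu Theta lik prior)%E ->
  (* Q is a family of densities on Theta *)
  (forall q, Q q -> is_density mu Theta q) ->
  (* the VB problem is non-degenerate: some member of Q has finite KL *)
  (exists2 q, Q q & (KL mu Theta q (posterior mu Theta lik prior) < +oo)%E) ->
  (* qs is the VB approximate posterior *)
  is_VB_posterior mu Theta Q (posterior mu Theta lik prior) qs ->
  (* (i) likelihood bounded from above *)
  (exists M : R, forall x, Theta x -> lik x <= M) ->
  (* (ii) proper prior *)
  is_density mu Theta prior ->
  (* (iii) qs bounded from above *)
  (exists M : R, forall x, Theta x -> qs x <= M) ->
  (* (iv) qs continuous and differentiable *)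
  {within Theta, continuous qs} ->
  (forall x, Theta x -> differentiable qs x) ->
  (* posterior continuous and differentiable on its support Omega_p *)
  {within [set x | Theta x /\ 0 < posterior mu Theta lik prior x],
     continuous (posterior mu Theta lik prior)} ->
  (forall x, Theta x -> 0 < posterior mu Theta lik prior x ->
     differentiable (posterior mu Theta lik prior) x) ->
  (* conclusion: the posterior dominates qs *)
  {ae mu, forall x : Rn R n, Theta x -> lik x * prior x = 0 -> qs x = 0}.
Proof.
move=> _ mT mlik lik0 ev0 Qd [q0 Qq0 KLq0] [Qqs qsmin] _ pd _ _ _ _ _.
set post := posterior mu Theta lik prior.
have [mqs [qs0 _]] := Qd _ Qqs.
have [mprior [prior0 _]] := pd.
set ev := evidence mu Theta lik prior.
set E := fine ev.
have E0 : 0 <= E by apply: fine_ge0; exact: ltW.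
have lp0 : forall x, Theta x -> 0 <= lik x * prior x.
  by move=> x Tx; rewrite mulr_ge0 // ?lik0 ?prior0.
have post0 : forall x, Theta x -> 0 <= post x.
  by move=> x Tx; rewrite /post /posterior divr_ge0 // lp0.
have mlp : measurable_fun Theta (fun x => lik x * prior x) by exact: measurable_realfun.measurable_funM.
set K := fun x => kl_integrand (qs x) (post x).
have KLfin : (KL mu Theta qs post < +oo)%E := le_lt_trans (qsmin _ Qq0) KLq0.
have Kneg : forall x, Theta x -> (K^\- x <= (post x)%:E)%E.
  move=> x Tx; rewrite funenegE ge_max; apply/andP; split; last by rewrite lee_fin post0.
  rewrite /K /kl_integrand; case: eqP => [_|qsx]; first by rewrite oppe0 lee_fin post0.
  case: ifP => [_|/negbT]; first by rewrite leNye.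
  rewrite -ltNge => px; rewrite lee_fin; apply: kl_bound => //.
  by rewrite lt_neqAle eq_sym qs0 // andbT; apply/eqP.
have intpost : (\int[mu]_(x in Theta) (post x)%:E < +oo)%E.
  have -> : (\int[mu]_(x in Theta) (post x)%:E = ev * E^-1%:E)%E.
    rewrite /ev /evidence -ge0_integralZr //; try by [apply/measurable_realfun.measurable_EFinP | move=> x Tx; rewrite lee_fin lp0 | rewrite lee_fin invr_ge0].
  have aux : forall v : \bar R, (0%R < v)%E -> (v * (fine v)^-1%:E < +oo)%E.
    case => [r| |] //= _; first by rewrite -EFinM ltry.
    by rewrite invr0 mule0 ltry.
  exact: aux.
have negfin : (\int[mu]_(x in Theta) K^\- x < +oo)%E.
  apply: le_lt_trans intpost; apply: mono_int => // x _; exact: funeneg_ge0.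
have [s Hs] : exists s : R, (\int[mu]_(x in Theta) K^\+ x = s%:E)%E.
  move: KLfin; rewrite /KL integralE.
  have n0 : (0 <= \int[mu]_(x in Theta) K^\- x)%E.
    by apply: integral_ge0 => x _; exact: funeneg_ge0.
  have p0 : (0 <= \int[mu]_(x in Theta) K^\+ x)%E.
    by apply: integral_ge0 => x _; exact: funepos_ge0.
  move: n0 negfin p0.
  case: (\int[mu]_(x in Theta) K^\- x)%E => [m| |] //= _ _.
  case: (\int[mu]_(x in Theta) K^\+ x)%E => [r| |] //= _ _; by exists r.
have s0 : (0 <= s)%R.
  rewrite -lee_fin -Hs; apply: integral_ge0 => x _; exact: funepos_ge0.
set A := (Theta `&` (fun x => lik x * prior x) @^-1` [set 0%R]) `&`
         (Theta `&` qs @^-1` [set~ 0%R]).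
have mA : measurable A.
  apply: measurableI; first exact: mlp mT _ (measurable_set1 _).
  exact: mqs mT _ (measurableC (measurable_set1 _)).
have AT : A `<=` Theta by move=> x [[]].
have key : forall k : R, (0 <= k)%R -> (k%:E * mu A <= s%:E)%E.
  move=> k k0; rewrite -Hs.
  have -> : mu A = mu (A `&` Theta) by rewrite setIidl.
  rewrite -integral_indic // -(@integralZl_indic _ _ _ mu Theta mT (fun=> A) k) //=; last first.
    by move=> kl0; move: (lt_le_trans kl0 k0); rewrite ltxx.
  apply: mono_int => x Tx.
    by rewrite lee_fin mulr_ge0 // indicE ler0n.
  rewrite indicE; case: (pselect (A x)) => Ax.
    rewrite funeposE /=.
    have -> : K x = +oo%E.
      move: Ax => [[_ /= lp] [_ /= qsx]].
      rewrite /K /kl_integrand ifF; last by apply/eqP.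
      by rewrite /post /posterior lp mul0r lexx.
    by rewrite le_max leey.
  by rewrite memNset // mulr0 funepos_ge0.
have muA : mu A = 0%E.
  have mA0 : (0 <= mu A)%E := measure_ge0 mu A.
  move: (key) mA0; case: (mu A) => [a| |] //= hk a0.
    rewrite lee_fin in a0.
    have : ~ (0 < a)%R.
      move=> apos; have := hk ((s + 1) / a)%R.
      rewrite -EFinM mulfVK ?gt_eqF // lee_fin => H.
      have : (s + 1 <= s)%R by apply: H; apply: divr_ge0 => //; lra.
      lra.
    move=> na; congr EFin; apply/eqP; rewrite eq_le a0 andbT leNgt; exact/negP.
  have := hk 1%R ler01; rewrite mul1e leye_eq => /eqP//.
exists A; split => //.
move=> x /= /not_implyP [Tx /not_implyP [lp qsx]].
by split; split.
Qed.
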